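(* If $\succ=(\succ_s)_{s\in S}$ is a priority profile in which every $\succ_s$ is acyclic, then the set $f^\succ$ of student optimal stable matchings for $\succ$ is nonempty (in particular the set $\mathcal{S}^\succ$ of stable matchings for $\succ$ is nonempty).
   Context: A binary relation $B$ on $X$ is asymmetric if $(x,y)\in B$ implies $(y,x)\notin B$; acyclic if for all $K\ge2$ and $x_0,\dots,x_K\in X$, [$(x_{k-1},x_k)\in B$ and $(x_k,x_{k-1})\notin B$ for all $k$] implies $(x_K,x_0)\notin B$. School choice setup: $I$ is a finite set of students with $|I|\ge 3$, $S$ a finite set of schools. Each student $i$ has a total order $P_i$ on $S\cup\{\emptyset\}$; $sR_is'$ means $sP_is'$ or $s=s'$. Each school $s$ has capacity $q_s\in\mathbb{Z}_{++}$ and an asymmetric priority relation $\succ_s$ on $I$. A matching $\mu$ assigns each $i$ to $\mu(i)\in S\cup\{\emptyset\}$, $\mu(s)=\{i:\mu(i)=s\}$, $|\mu(s)|\le q_s$. $\mu$ is stable for $\succ$ if it is individually rational ($\mu(i)R_i\emptyset$ for all $i$), non-wasteful ($sP_i\mu(i)$ implies $|\mu(s)|=q_s$) and fair (no $s$, $j\in\mu(s)$, $i\notin\mu(s)$ with $sR_i\mu(i)$ and $(i,j)\in\succ_s$). $\mu$ is Pareto dominated by $\mu'$ if $\mu'(i)R_i\mu(i)$ for all $i$ and $\mu'(i)P_i\mu(i)$ for some $i$. A student optimal stable matching (SOSM) for $\succ$ is a stable matching for $\succ$ not Pareto dominated by any stable matching for $\succ$; $\mathcal{S}^\succ$ and $f^\succ\subseteq\mathcal{S}^\succ$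 denote the sets of stable matchings and SOSMs for $\succ$. *)

(* Defs.v *)
(* Students I and schools S are finite types; the null
   school (being unassigned) is represented by [None : option S]. *)
From mathcomp Require Import all_boot.
Set Implicit Arguments. Unset Strict Implicit. Unset Printing Implicit Defensive.

Section SchoolChoice.
Variables (I S : finType).

Definition asymmetric (X : Type) (B : rel X) : Prop :=
  forall x y, B x y -> ~~ B y x.

Definition acyclic (X : Type) (B : rel X) : Prop :=
  forall (K : nat) (x : nat -> X), 2 <= K ->
    (forall k, 1 <= k <= K -> B (x k.-1) (x k) && ~~ B (x k) (x k.-1)) ->
    ~~ B (x K) (x 0).

Definition strict_total_order (X : eqType) (P : rel X) : Prop :=
  [/\ irreflexive P, transitive P & forall a b, a != b -> P a b || P b a].

Definition weak (X : eqType) (P : rel X) : rel X := fun a b => P a b || (a == b).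

Definition assigned (mu : I -> option S) (s : S) : {set I} :=
  [set i | mu i == Some s].

Definition is_matching (q : S -> nat) (mu : I -> option S) : Prop :=
  forall s, #|assigned mu s| <= q s.

Definition individually_rational (P : I -> rel (option S)) (mu : I -> option S) :=
  forall i, weak (P i) (mu i) None.

Definition non_wasteful (P : I -> rel (option S)) (q : S -> nat) (mu : I -> option S) :=
  forall i s, P i (Some s) (mu i) -> #|assigned mu s| = q s.

Definition fair (P : I -> rel (option S)) (pr : S -> rel I) (mu : I -> option S) :=
  ~ (exists s i j, [/\ j \in assigned mu s, i \notin assigned mu s,
                       weak (P i) (Some s) (mu i) & pr s i j]).

Definition stable (P : I -> rel (option S)) (q : S -> nat) (pr : S -> rel I)
  (mu : I -> option S) : Prop :=
  [/\ is_matching q mu, individually_rational P mu, non_wasteful P q mu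
    & fair P pr mu].

Definition pareto_dominated (P : I -> rel (option S)) (mu mu' : I -> option S) :=
  (forall i, weak (P i) (mu' i) (mu i)) /\ (exists i, P i (mu' i) (mu i)).

Definition SOSM (P : I -> rel (option S)) (q : S -> nat) (pr : S -> rel I)
  (mu : I -> option S) : Prop :=
  stable P q pr mu /\
  ~ (exists mu', stable P q pr mu' /\ pareto_dominated P mu mu').

End SchoolChoice.

(* Main.v *)
Require Import Defs.
From mathcomp Require Import all_boot.
From mathcomp Require Import zify.
From Stdlib Require Import Classical.
Set Implicit Arguments. Unset Strict Implicit. Unset Printing Implicit Defensive.

Lemma acyc_max (T : finType) (B : rel T) (W : {set T}) (x0 : T) :
  asymmetric B -> acyclic B -> x0 \in W ->
  exists2 j, j \in W & forall k, k \in W -> ~~ B k j.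
Proof.
move=> asB acB x0W.
apply: NNPP => Hn.
have H : forall j, j \in W -> exists k, k \in W /\ B k j.
  move=> j jW; apply: NNPP => Hk; apply: Hn; exists j => // k kW.
  apply/negP => Bkj; apply: Hk; by exists k.
pose f j := if [pick k in W | B k j] is Some k then k else j.
have fP : forall j, j \in W -> f j \in W /\ B (f j) j.
  move=> j jW; rewrite /f; case: pickP => [k /andP[] //|none].
  have [k [kW Bkj]] := H j jW. by move: (none k); rewrite kW Bkj.
pose x n := iter n f x0.
have xW : forall n, x n \in W.
  elim=> [|n IH] //=. by case: (fP _ IH).
have xB : forall n, B (x n.+1) (x n).
  move=> n; by case: (fP _ (xW n)).
have irr : forall y, ~~ B y y.
  move=> y; apply/negP => Byy; by move: (asB _ _ Byy); rewrite Byy.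
pose g (i : 'I_(#|T|.+1)) := x i.
have ninj : ~ injective g.
  move=> inj; move: (leq_card g inj); by rewrite card_ord ltnn.
have [a [b [ab gab]]] : exists a b, a != b /\ g a = g b.
  apply: NNPP => Hc; apply: ninj => a b gab; apply/eqP; apply: NNPP => nab.
  apply: Hc; exists a, b; split => //; exact/negP.
have {ab gab ninj} [a' [b' [lt xe]]] : exists a b, a < b /\ x a = x b.
  case: (ltngtP a b) => h; [by exists a, b | by exists b, a |].
  by move: ab => /eqP; case; apply: val_inj.
have : b' = a'.+1 \/ b' = a'.+2 \/ a'.+3 <= b' by lia.
case=> [Eb|[Eb|h3]]; [subst b'|subst b'|].
- by move: (xB a'); rewrite -xe; move: (irr (x a')) => /negP.
- move: (xB a'.+1) (asB _ _ (xB a')); rewrite -xe => ->. done.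
- apply: (negP (acB (b' - a'.+1) (fun k => x (b' - k)) _ _)).
  + lia.
  + move=> k /andP[k1 kK] /=.
    have -> : b' - k.-1 = (b' - k).+1 by lia.
    by rewrite xB; exact: asB _ _ (xB _).
  + have -> : b' - (b' - a'.+1) = a'.+1 by lia.
    by rewrite subn0 -xe; exact: xB.
Qed.

Section Main.
Variables (I S : finType) (P : I -> rel (option S)) (q : S -> nat) (pr : S -> rel I).
Hypothesis HP : forall i, strict_total_order (P i).

Definition pot (mu : I -> option S) := \sum_(i : I) #|[set y | P i (mu i) y]|.

Lemma pot_sub mu mu' i : weak (P i) (mu' i) (mu i) ->
  [set y | P i (mu i) y] \subset [set y | P i (mu' i) y].
Proof.
move=> w; apply/subsetP => y; rewrite !inE.
case: (HP i) => _ tr _.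
case/orP: w => [h|/eqP->] //. by move=> h2; exact: tr h h2.
Qed.

Lemma pot_lt mu mu' : pareto_dominated P mu mu' -> pot mu < pot mu'.
Proof.
move=> [all [i Pi]]; rewrite /pot (bigD1 i) //= [X in _ < X](bigD1 i) //=.
have h1 : #|[set y | P i (mu i) y]| < #|[set y | P i (mu' i) y]|.
  apply: proper_card; apply/properP; split.
    by apply: pot_sub; rewrite /weak Pi.
  exists (mu i); rewrite !inE // .
  by case: (HP i) => irr _ _; rewrite irr.
have h2 : \sum_(k | k != i) #|[set y | P k (mu k) y]| <=
          \sum_(k | k != i) #|[set y | P k (mu' k) y]|.
  apply: leq_sum => k _; apply: subset_leq_card; exact: pot_sub.
by rewrite -addSn; apply: leq_add.
Qed.

Lemma pot_le mu : pot mu <= \sum_(i : I) #|{: option S}|.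
Proof. apply: leq_sum => i _; exact: max_card. Qed.

Lemma exists_max (E : (I -> option S) -> Prop) mu0 : E mu0 ->
  exists mu, E mu /\ ~ exists mu', E mu' /\ pareto_dominated P mu mu'.
Proof.
move=> E0; set N := \sum_(i : I) #|{: option S}|.
suff: forall n mu, E mu -> N - pot mu <= n ->
  exists mu, E mu /\ ~ exists mu', E mu' /\ pareto_dominated P mu mu'.
  by move=> H; exact: (H _ mu0 E0 (leqnn _)).
elim=> [|n IH] mu Emu hn;
  (case: (classic (exists mu', E mu' /\ pareto_dominated P mu mu')) => [[mu' [E' d]]|nd];
   [|by exists mu]).
- move: (pot_lt d) (pot_le mu'); rewrite -/N; lia.
- apply: (IH mu' E'); move: (pot_lt d) (pot_le mu'); rewrite -/N; lia.
Qed.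

Definition EF mu := [/\ is_matching q mu, individually_rational P mu & fair P pr mu].

Hypothesis asy : forall s, asymmetric (pr s).
Hypothesis acy : forall s, acyclic (pr s).

Lemma EF_max_stable mu : EF mu ->
  ~ (exists mu', EF mu' /\ pareto_dominated P mu mu') -> stable P q pr mu.
Proof.
case=> mat ir fa nd; split => // i s Pis.
apply/eqP; apply: contraT => neq.
have lt : #|assigned mu s| < q s by rewrite ltn_neqAle neq mat.
have iW : i \in [set k | P k (Some s) (mu k)] by rewrite inE.
have [j jW jmax] := acyc_max (@asy s) (@acy s) iW.
rewrite inE in jW.
have irrj : forall x, ~~ P j x x by move=> x; case: (HP j) => irr _ _; rewrite irr.
have trj : forall x y z, P j x y -> P j y z -> P j x z.
  by move=> x y z; case: (HP j) => _ tr _; exact: tr.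
have njs : mu j != Some s by apply: contraNneq (irrj (Some s)) => e; rewrite -{2}e.
pose mu' k := if k == j then Some s else mu k.
exfalso; apply: nd; exists mu'; split; last first.
  split.
    move=> k; rewrite /mu' /weak; case: (eqVneq k j) => [->|_]; first by rewrite jW.
    by rewrite eqxx orbT.
  by exists j; rewrite /mu' eqxx.
split.
- move=> t; case: (eqVneq t s) => [->|ts].
    apply: (@leq_trans #|j |: assigned mu s|).
      apply: subset_leq_card; apply/subsetP => k; rewrite !inE /mu'.
      by case: (eqVneq k j) => [->|_]; rewrite ?eqxx ?orbT.
    rewrite cardsU1; lia.
  apply: leq_trans (mat t); apply: subset_leq_card; apply/subsetP => k.
  rewrite !inE /mu'; case: (eqVneq k j) => // _ /eqP [] e; by rewrite e eqxx in ts.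
- move=> k; rewrite /mu' /weak; case: (eqVneq k j) => [->|_]; last exact: ir.
  case/orP: (ir j) => [h|/eqP e]; first by rewrite (trj _ _ _ jW h).
  by rewrite -e jW.
- move=> [t [a [b [bin ain wa pab]]]]; apply: fa.
  move: bin ain wa; rewrite !inE /mu'.
  case: (eqVneq a j) => [ej|aj]; first subst a.
    move=> bin ain wa.
    have ts : Some t != Some s by move: ain; rewrite eq_sym.
    have Pt : P j (Some t) (Some s) by move: wa; rewrite /weak (negbTE ts) orbF.
    have Ptm := trj _ _ _ Pt jW.
    have bj : b != j.
      apply/negP => /eqP e; move: bin; rewrite e eqxx => /eqP [] e'.
      by rewrite e' eqxx in ts.
    move: bin; rewrite (negbTE bj) => bin.
    exists t, j, b; split; rewrite ?inE //.
      by apply: contraNneq (irrj (Some t)) => e; rewrite -{2}e.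
    by rewrite /weak Ptm.
  case: (eqVneq b j) => [eb|bj]; first subst b.
    move=> /eqP [] et; subst t => ain wa.
    have Pa : P a (Some s) (mu a).
      by move: wa; rewrite /weak eq_sym (negbTE ain) orbF.
    by move: (jmax a); rewrite inE Pa pab => /(_ isT).
  move=> bin ain wa; exists t, a, b; split; by rewrite ?inE.
Qed.

End Main.

Theorem corollary1 (I S : finType) (P : I -> rel (option S)) (q : S -> nat)
  (pr : S -> rel I) :
  3 <= #|I| ->
  (forall i, strict_total_order (P i)) ->
  (forall s, 0 < q s) ->
  (forall s, asymmetric (pr s)) ->
  (forall s, acyclic (pr s)) ->
  (exists mu : I -> option S, SOSM P q pr mu) /\
  (exists mu : I -> option S, stable P q pr mu).
Proof.
move=> _ HP _ asy acy.
have E0 : EF P q pr (fun _ => None).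
  split.
  - by move=> s; rewrite /assigned (_ : [set i | None == Some s] = set0) ?cards0 //;
      apply/setP => i; rewrite !inE.
  - by move=> i; rewrite /weak eqxx orbT.
  - by move=> [s [i [j [jin _ _ _]]]]; move: jin; rewrite inE.
have [mu [Emu nd]] := exists_max HP E0.
have st : stable P q pr mu := EF_max_stable HP asy acy Emu nd.
split; exists mu => //; split => // [[mu' [st' d]]].
apply: nd; exists mu'; split => //.
by case: st' => m i _ f; split.
Qed.
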